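(* Let $1\le i\le b$, let $n$ be a positive integer and $m,k$ non-negative integers. Then (1) $d_i(n+p-1)\ge q\,d_i(n)$; (2) $y_i(m+p-1,k)\ge q\,y_i(m,k)$; (3) $y_i(m+p-1)>q\,y_i(m)$.
   Context: Let $q=p^b$ with $p$ prime, $b\ge1$. Let $y\in\mathbb{Z}_p$ be written $y=\sum_{i=1}^b p^{i-1}y_i$ with $y_i=\sum_{j\ge0}y_{i,j}q^j$, $0\le y_{i,j}<p$. Assume $y$ is $q$-full: no $y_i$ is a non-negative integer (so $\sum_j y_{i,j}=\infty$). For $n\ge1$, $d_i(n)=p^{i-1}q^w$ where $w\ge0$ is the unique integer with $\sum_{j=0}^{w-1}y_{i,j}<n\le\sum_{j=0}^{w}y_{i,j}$. For $m\in\mathbb{Z}$, $y_i(m)=\sum_{n=1}^m d_i(n)$ (zero if $m\le0$), and $y_i(m,k)=y_i(m+k)-y_i(m)$. *)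

(* Defs.v *)
From Stdlib Require Import ClassicalEpsilon.
From mathcomp Require Import all_boot.
Set Implicit Arguments. Unset Strict Implicit. Unset Printing Implicit Defensive.

(* A p-adic integer y in Z_p is represented by its base-p digit sequence
   a : nat -> nat, with a t < p for all t, i.e. y = sum_t a t * p^t. *)
Definition is_digits (p : nat) (a : nat -> nat) : Prop := forall t, a t < p.

(* y_{i,j} : the j-th base-q digit (q = p^b) of y_i, where
   y = sum_{i=1}^b p^(i-1) y_i; this is the base-p digit of y at
   position (i-1) + b*j. *)
Definition ydig (b : nat) (a : nat -> nat) (i j : nat) : nat := a (i.-1 + b * j).

(* y is q-full: for each 1 <= i <= b, y_i is not a non-negative integer,
   i.e. infinitely many of its digits y_{i,j} are non-zero. *)
Definition q_full (b : nat) (a : nat -> nat) : Prop :=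
  forall i, 1 <= i <= b -> forall N, exists j, N <= j /\ ydig b a i j != 0.

Definition psum (b : nat) (a : nat -> nat) (i w : nat) : nat :=
  \sum_(j < w.+1) ydig b a i j.

(* w_i(n): the least w with n <= sum_{j<=w} y_{i,j}; for n >= 1 this is the
   unique w with sum_{j<w} y_{i,j} < n <= sum_{j<=w} y_{i,j}.
   (Default 0 if no such w exists, which cannot happen for q-full y.) *)
Definition wfun (b : nat) (a : nat -> nat) (i n : nat) : nat :=
  match excluded_middle_informative (exists w, n <= psum b a i w) with
  | left h => ex_minn h
  | right _ => 0
  end.

Definition d_fun (p b : nat) (a : nat -> nat) (i n : nat) : nat :=
  p ^ i.-1 * (p ^ b) ^ wfun b a i n.

Definition y_fun (p b : nat) (a : nat -> nat) (i m : nat) : nat :=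
  \sum_(1 <= n < m.+1) d_fun p b a i n.

(* y_i(m,k) = y_i(m+k) - y_i(m)  (non-negative, so truncated subtraction is exact) *)
Definition y2_fun (p b : nat) (a : nat -> nat) (i m k : nat) : nat :=
  y_fun p b a i (m + k) - y_fun p b a i m.

(* Main.v *)
Require Import Defs.
From mathcomp Require Import all_boot.
From mathcomp Require Import zify.
From Stdlib Require Import ClassicalEpsilon.

Section S.
Variables (p b : nat) (a : nat -> nat) (i : nat).

Lemma psumS w : psum b a i w.+1 = psum b a i w + ydig b a i w.+1.
Proof. by rewrite /psum big_ord_recr. Qed.

Lemma psum_mono w1 w2 : w1 <= w2 -> psum b a i w1 <= psum b a i w2.
Proof.
move=> h; rewrite -(subnKC h); elim: (w2 - w1) => [|d IH]; first by rewrite addn0.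
by rewrite addnS psumS; apply: leq_trans IH (leq_addr _ _).
Qed.

Lemma psum_unb : q_full b a -> 1 <= i <= b -> forall N, exists w, N <= psum b a i w.
Proof.
move=> hq hi; elim=> [|N [w hw]]; first by exists 0.
have [j [hj hnz]] := hq i hi w.+1.
exists j; case: j hj hnz => [//|j] hj hnz.
rewrite psumS; have := @psum_mono w j (ltnSE hj); lia.
Qed.

Lemma wfunP N : q_full b a -> 1 <= i <= b ->
  N <= psum b a i (wfun b a i N) /\ forall w, N <= psum b a i w -> wfun b a i N <= w.
Proof.
move=> hq hi; rewrite /wfun; case: excluded_middle_informative => [h|h].
  by case: ex_minnP.
by exfalso; apply: h; apply: psum_unb.
Qed.

Lemma d_pos n : prime p -> 0 < d_fun p b a i n.
Proof. by move=> hp; rewrite /d_fun muln_gt0 !expn_gt0 prime_gt0. Qed.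

Lemma part1 n : prime p -> is_digits p a -> q_full b a -> 1 <= i <= b -> 0 < n ->
  p ^ b * d_fun p b a i n <= d_fun p b a i (n + p - 1).
Proof.
move=> hp hd hq hi hn.
have [h1 h2] := wfunP n hq hi.
have [h3 h4] := wfunP (n + p - 1) hq hi.
set w := wfun b a i n in h1 h2 *.
set w' := wfun b a i (n + p - 1) in h3 h4 *.
have hlt : psum b a i w < n + p - 1.
  have hp2 := prime_gt1 hp.
  case E: w => [|w0].
    rewrite /psum big_ord1 /ydig; have := hd (i.-1 + b * (@ord0 0)); lia.
  rewrite psumS.
  have : psum b a i w0 < n.
    rewrite ltnNge; apply/negP => /h2; rewrite E; lia.
  have := hd (i.-1 + b * w0.+1); rewrite /ydig; lia.
have hww : w < w'.
  rewrite ltnNge; apply/negP => /psum_mono; lia.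
rewrite /d_fun mulnCA -expnS; apply: leq_mul => //.
by apply: leq_pexp2l; rewrite ?expn_gt0 ?prime_gt0.
Qed.

Lemma yS m : y_fun p b a i m.+1 = y_fun p b a i m + d_fun p b a i m.+1.
Proof. by rewrite /y_fun big_nat_recr. Qed.

Lemma yD m k : y_fun p b a i (m + k) =
  y_fun p b a i m + \sum_(j < k) d_fun p b a i (m + j.+1).
Proof.
elim: k => [|k IH]; first by rewrite addn0 big_ord0 addn0.
by rewrite addnS yS IH big_ord_recr /= addnS addnA.
Qed.

End S.

Theorem lemma6p5 (p b : nat) (a : nat -> nat) (i n m k : nat) :
  prime p -> 1 <= b -> is_digits p a -> q_full b a ->
  1 <= i <= b -> 0 < n ->
  [/\ d_fun p b a i (n + p - 1) >= p ^ b * d_fun p b a i n,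
      y2_fun p b a i (m + p - 1) k >= p ^ b * y2_fun p b a i m k
    & y_fun p b a i (m + p - 1) > p ^ b * y_fun p b a i m].
Proof.
move=> hp hb hd hq hi hn.
have hp2 := prime_gt1 hp.
have key : forall m j, p ^ b * d_fun p b a i (m + j.+1) <= d_fun p b a i (m + p - 1 + j.+1).
  move=> {}m j; have -> : m + p - 1 + j.+1 = m + j.+1 + p - 1 by lia.
  by apply: part1 => //; lia.
split; first exact: part1.
- rewrite /y2_fun !yD !addKn big_distrr; apply: leq_sum => j _; exact: key.
- have -> : m + p - 1 = (p - 1) + m by lia.
  rewrite yD -{1}(add0n m) yD.
  have -> : y_fun p b a i 0 = 0 by rewrite /y_fun big_geq.
  rewrite add0n big_distrr.
  have hpos : 0 < y_fun p b a i (p - 1).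
    have -> : p - 1 = (p - 2).+1 by lia.
    by rewrite yS addn_gt0 d_pos ?orbT.
  have : \sum_(j < m) p ^ b * d_fun p b a i (0 + j.+1) <=
         \sum_(j < m) d_fun p b a i (p - 1 + j.+1).
    apply: leq_sum => j _; have := key 0 j; rewrite add0n.
    by have -> : 0 + p - 1 = p - 1 by lia.
  by move=> H; have := leq_add H hpos; rewrite addn1 [X in _ <= X]addnC.
Qed.
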